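(* As formal power series, $$\sum_{M\geq1}g(M)x^M=\frac{x-x^3}{(1-x-x^2)^2},\qquad \sum_{M\geq1}h(M)x^M=\frac{x-x^2}{(1-x-x^2)^2},$$ $$\sum_{M\geq1}g_1(M)x^M=\frac{x^2}{(1-x-x^2)^2}=\sum_{M\geq1}h_1(M)x^M.$$ In particular $g_1(M)=h_1(M)$ for all $M\geq1$.
   Context: The perimeter of a nonempty partition $\lambda$ with largest part $\lambda_1$ and $\ell(\lambda)$ parts is $\lambda_1+\ell(\lambda)-1$. $\mathcal G(M)$ is the set of partitions into odd parts with perimeter $M$, $\mathcal H(M)$ the set of partitions into distinct parts with perimeter $M$; $g(M)$ (resp. $h(M)$) is the total number of parts, summed over all partitions in $\mathcal G(M)$ (resp. $\mathcal H(M)$). $\mathcal G_1(M)$ is the set of partitions with perimeter $M$ in which exactly one distinct even integer occurs as a part (possibly with multiplicity greater than one) and all other parts are odd; $\mathcal H_1(M)$ is the set of partitions with perimeter $M$ in which exactly one part value occurs at least twice and every other part value occurs exactly once. $g_1(M)=|\mathcal G_1(M)|$, $h_1(M)=|\mathcal H_1(M)|$. *)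

(* Defs.v *)
From HB Require Import structures.
From mathcomp Require Import all_boot all_order all_algebra.
Set Implicit Arguments. Unset Strict Implicit. Unset Printing Implicit Defensive.
Import Order.TTheory GRing.Theory Num.Theory.

(* A partition with at most M parts, all parts <= M, written as its
   zero-padded part sequence (lambda_1, ..., lambda_M): entry i is the
   (i+1)-th largest part, or 0 if there are fewer than i+1 parts. *)
Definition ptuple (M : nat) := {ffun 'I_M -> 'I_M.+1}.

Definition is_partition M (P : ptuple M) : bool :=
  [forall i : 'I_M, forall j : 'I_M, (i <= j)%N ==> (P j <= P i)%N].

Definition nparts M (P : ptuple M) : nat := #|[set i | P i != ord0]|.
Definition largest M (P : ptuple M) : nat := \max_(i : 'I_M) (P i : nat).
Definition perimeter M (P : ptuple M) : nat := largest P + nparts P - 1.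

Definition perimM M (P : ptuple M) : bool :=
  [&& is_partition P, (0 < nparts P)%N & perimeter P == M].

Definition odd_parts M (P : ptuple M) : bool :=
  [forall i : 'I_M, (P i != ord0) ==> odd (P i)].
Definition distinct_parts M (P : ptuple M) : bool :=
  [forall i : 'I_M, forall j : 'I_M, ((P i != ord0) && (i != j)) ==> (P i != P j)].

Definition even_values M (P : ptuple M) : {set 'I_M.+1} :=
  [set v : 'I_M.+1 | [&& v != ord0, ~~ odd v & [exists i, P i == v]]].
Definition G1_prop M (P : ptuple M) : bool := #|even_values P| == 1%N.

Definition mult M (P : ptuple M) (v : 'I_M.+1) : nat := #|[set i | P i == v]|.
Definition repeated_values M (P : ptuple M) : {set 'I_M.+1} :=
  [set v : 'I_M.+1 | (v != ord0) && (2 <= mult P v)%N].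
Definition H1_prop M (P : ptuple M) : bool := #|repeated_values P| == 1%N.

Definition g (M : nat) : nat := \sum_(P : ptuple M | perimM P && odd_parts P) nparts P.
Definition h (M : nat) : nat := \sum_(P : ptuple M | perimM P && distinct_parts P) nparts P.
Definition g1 (M : nat) : nat := #|[set P : ptuple M | perimM P && G1_prop P]|.
Definition h1 (M : nat) : nat := #|[set P : ptuple M | perimM P && H1_prop P]|.

Local Open Scope ring_scope.

(* truncation (degrees 0..N) of the formal power series sum_{M>=1} a(M) x^M *)
Definition trunc_series (a : nat -> nat) (N : nat) : {poly int} :=
  \poly_(i < N.+1) (if i == 0%N then 0 else (a i)%:R).

(* "sum_{M>=1} a(M) x^M = P / Q" as formal power series (Q(0) = 1):
   Q * A = P, checked on every truncation. *)
Definition series_eq (a : nat -> nat) (Pn Q : {poly int}) : Prop :=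
  forall N : nat, take_poly N.+1 (Q * trunc_series a N) = take_poly N.+1 Pn.

Definition den : {poly int} := (1 - 'X - 'X^2) ^+ 2.

(* Main.v *)
Require Import Defs.
From mathcomp Require Import all_boot all_order all_algebra.
From mathcomp Require Import zify ring lra.
Set Implicit Arguments. Unset Strict Implicit. Unset Printing Implicit Defensive.

Definition dupl (s : seq nat) := head 0 s :: s.
Definition bumpl (s : seq nat) := (head 0 s).+1 :: behead s.

Fixpoint L (M : nat) : seq (seq nat) :=
  match M with
  | 0 => [::]
  | S m => match m with
           | 0 => [:: [:: 1]]
           | _ => map dupl (L m) ++ map bumpl (L m)
           end
  end.

Definition validseq (M : nat) (s : seq nat) : bool :=
  match s with
  | [::] => false
  | x :: t => [&& path geq x t, all (fun y => 0 < y) (x :: t) & x + size t == M]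
  end.

Lemma LSS m : L m.+2 = map dupl (L m.+1) ++ map bumpl (L m.+1).
Proof. by []. Qed.

Lemma path_geqS x t : path geq x t -> path geq x.+1 t.
Proof. by case: t => //= y t /andP[h ->]; rewrite andbT /geq /=; apply: leqW. Qed.

Lemma memL M s : (s \in L M) = validseq M s.
Proof.
elim: M s => [|[|m] IH] s.
- by case: s => //= x t; rewrite in_nil; symmetry; apply/and3P => -[_ /andP[h _] /eqP e]; lia.
- rewrite /= inE; case: s => [|x t] //=.
  apply/eqP/idP => [[-> ->] // | /and3P[_ /andP[hx _] /eqP e]].
  have -> : x = 1 by lia. by case: t e => //= y t; lia.
- rewrite LSS mem_cat; apply/orP/idP.
  + case=> /mapP[u]; rewrite IH; case: u => [|y w] //= /and3P[hp /andP[hy hw] /eqP e] ->.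
    * by rewrite /= /geq leqnn hp hy hw /=; apply/eqP; lia.
    * by rewrite /= path_geqS //= hw /=; apply/eqP; lia.
  + case: s => [|x t] //= /and3P[hp /andP[hx ht] /eqP e].
    case: t hp ht e => [|y w] hp ht e.
    * right; apply/mapP; exists [:: x.-1]; first by rewrite IH /=; rewrite /= in e; apply/andP; split; [lia|apply/eqP; lia].
      by rewrite /bumpl /=; congr cons; lia.
    * move: hp => /= /andP[hyx hp].
      case: (eqVneq y x) => [eyx|nyx].
      - left; apply/mapP; exists (x :: w); last by rewrite /dupl /= eyx.
        rewrite IH /=; move: ht => /= /andP[_ ->]; rewrite hx -eyx hp /=; apply/eqP; rewrite /= in e; lia.
      - right; apply/mapP; exists (x.-1 :: y :: w); last by rewrite /bumpl /=; congr cons; lia.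
        rewrite IH /= hp; move: ht => /= /andP[hy hw]; rewrite hw andbT; rewrite /geq in hyx *.
        rewrite /= in e; move/eqP: nyx => nyx; apply/and3P; split; [lia|apply/and3P; split; lia|apply/eqP; lia].
Qed.

Lemma uniqL M : uniq (L M).
Proof.
elim: M => [|[|m] IH] //.
rewrite LSS cat_uniq; apply/and3P; split.
- by rewrite map_inj_uniq // => u v [].
- apply/hasPn => _ /mapP[u uL ->]; apply/mapP => -[v vL].
  move: uL vL; rewrite !memL; case: u => [|x t] //; case: v => [|y w] //=.
  move=> /and3P[hp _ _] _ [exy et]; move: hp; rewrite et /= /geq; lia.
- rewrite map_inj_in_uniq // => u v; rewrite !memL.
  by case: u => [|x t] //; case: v => [|y w] //= _ _ [-> ->].
Qed.

Lemma sumLS (F : seq nat -> nat) m :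
  \sum_(s <- L m.+2) F s = \sum_(s <- L m.+1) F (dupl s) + \sum_(s <- L m.+1) F (bumpl s).
Proof. by rewrite LSS big_cat !big_map. Qed.

Lemma sumL_ext (F G : seq nat -> nat) M :
  (forall x t, path geq x t -> F (x :: t) = G (x :: t)) ->
  \sum_(s <- L M) F s = \sum_(s <- L M) G s.
Proof.
move=> h; apply: eq_big_seq => s; rewrite memL.
by case: s => [|x t] //= /and3P[hp _ _]; apply: h.
Qed.

Lemma path_all x t : path geq x t -> all (fun y => y <= x) t.
Proof.
move=> hp; have tr : transitive geq by move=> a b c /= h1 h2; apply: leq_trans h2 h1.
by have := order_path_min tr hp.
Qed.

Lemma path_notin x t : path geq x t -> x.+1 \notin t.
Proof. move=> /path_all /allP h; apply/negP => /h; lia. Qed.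

Fixpoint fib n := match n with 0 => 0 | S n' => match n' with 0 => 1 | S n'' => fib n' + fib n'' end end.
Fixpoint qq n := match n with 0 => 0 | S n' => match n' with 0 => 0 | S n'' => qq n' + qq n'' + fib n' end end.
Lemma fibS n : fib n.+2 = fib n.+1 + fib n. Proof. by []. Qed.
Lemma qqS n : qq n.+2 = qq n.+1 + qq n + fib n.+1. Proof. by []. Qed.

Lemma sumL0 (F : seq nat -> nat) M :
  (forall x t, path geq x t -> F (x :: t) = 0) -> \sum_(s <- L M) F s = 0.
Proof. by move=> h; rewrite (@sumL_ext F (fun _ => 0)) ?big1. Qed.

Definition co M := \sum_(s <- L M) nat_of_bool (all odd s).
Definition ce M := \sum_(s <- L M) nat_of_bool (all odd (behead s) && ~~ odd (head 0 s)).
Definition So M := \sum_(s <- L M) (all odd s) * size s.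
Definition Se M := \sum_(s <- L M) (all odd (behead s) && ~~ odd (head 0 s)) * size s.

Lemma coS m : co m.+2 = co m.+1 + ce m.+1.
Proof.
rewrite /co /ce sumLS; congr (_ + _); apply: sumL_ext => x t hp /=.
  by rewrite andbA andbb. by rewrite andbC.
Qed.
Lemma ceS m : ce m.+2 = co m.+1.
Proof.
rewrite /co /ce sumLS sumL0 ?add0n => [|x t _]; last by rewrite /=; case: (odd x); rewrite ?andbF.
by apply: sumL_ext => x t hp /=; rewrite negbK andbC.
Qed.
Lemma SoS m : So m.+2 = So m.+1 + co m.+1 + Se m.+1.
Proof.
rewrite /So /co /Se sumLS -[in RHS]big_split; congr (_ + _); apply: sumL_ext => x t hp /=.
  by rewrite andbA andbb; case: (_ && _) => /=; lia.
by rewrite andbC.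
Qed.
Lemma SeS m : Se m.+2 = So m.+1.
Proof.
rewrite /So /Se sumLS sumL0 ?add0n => [|x t _]; last by rewrite /=; case: (odd x); rewrite ?andbF.
by apply: sumL_ext => x t hp /=; rewrite negbK andbC.
Qed.
Lemma co_fib m : co m.+1 = fib m.+1 /\ ce m.+1 = fib m.
Proof.
elim: m => [|m [IH1 IH2]]; first by rewrite /co /ce /= !big_seq1.
by rewrite coS ceS IH1 IH2 fibS addnC.
Qed.
Lemma So_rec M : 0 < M -> So M.+2 = So M.+1 + So M + fib M.+1.
Proof.
case: M => // m _; rewrite SoS SeS (proj1 (co_fib _)); lia.
Qed.

Definition u1 M := \sum_(s <- L M) nat_of_bool (uniq s).
Definition u2 M := \sum_(s <- L M) nat_of_bool (uniq (behead s) && (head 0 s \in behead s)).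
Definition H1 M := \sum_(s <- L M) (uniq s) * size s.
Definition H2 M := \sum_(s <- L M) (uniq (behead s) && (head 0 s \in behead s)) * size s.

Lemma uniq_bump x t : path geq x t -> uniq (x.+1 :: t) = uniq t.
Proof. by move=> hp; rewrite /= (negbTE (path_notin hp)). Qed.

Lemma u1S m : u1 m.+2 = u1 m.+1 + u2 m.+1.
Proof.
rewrite /u1 /u2 sumLS sumL0 ?add0n => [|x t _]; last by rewrite /= inE eqxx.
rewrite -big_split; apply: sumL_ext => x t hp /=; rewrite (negbTE (path_notin hp)) /=.
by case: (x \in t); case: (uniq t).
Qed.
Lemma u2S m : u2 m.+2 = u1 m.+1.
Proof.
rewrite /u1 /u2 sumLS [X in _ + X]sumL0 ?addn0 => [|x t hp]; last by rewrite /= (negbTE (path_notin hp)) andbF.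
by apply: sumL_ext => x t hp /=; rewrite inE eqxx andbT.
Qed.
Lemma H1S m : H1 m.+2 = H1 m.+1 + H2 m.+1.
Proof.
rewrite /H1 /H2 sumLS sumL0 ?add0n => [|x t _]; last by rewrite /= inE eqxx.
rewrite -big_split; apply: sumL_ext => x t hp /=; rewrite (negbTE (path_notin hp)) /=.
by case: (x \in t); case: (uniq t) => /=; lia.
Qed.
Lemma H2S m : H2 m.+2 = H1 m.+1 + u1 m.+1.
Proof.
rewrite /H1 /H2 /u1 sumLS [X in _ + X]sumL0 ?addn0 => [|x t hp]; last by rewrite /= (negbTE (path_notin hp)) andbF.
rewrite -big_split; apply: sumL_ext => x t hp /=; rewrite inE eqxx andbT /=.
by case: (_ && _) => /=; lia.
Qed.
Lemma u1_fib m : u1 m.+1 = fib m.+1 /\ u2 m.+1 = fib m.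
Proof.
elim: m => [|m [IH1 IH2]]; first by rewrite /u1 /u2 /= !big_seq1.
by rewrite u1S u2S IH1 IH2 fibS.
Qed.
Lemma H1_rec M : 0 < M -> H1 M.+2 = H1 M.+1 + H1 M + fib M.
Proof.
case: M => // m _; rewrite H1S H2S (proj1 (u1_fib _)); lia.
Qed.

Definition ev (s : seq nat) := \sum_(v <- undup s) nat_of_bool (~~ odd v).
Lemma ev_cons x t : ev (x :: t) = ev t + (~~ odd x && (x \notin t)).
Proof. by rewrite /ev /=; case: ifP => h; rewrite ?big_cons /= ?andbF ?addn0 ?andbT // addnC. Qed.

Definition Ng er hp inr M := \sum_(s <- L M)
  nat_of_bool [&& ev (behead s) == er, odd (head 0 s) == hp & (head 0 s \in behead s) == inr].

Ltac brute x t := rewrite ?ev_cons /=; case: (odd x); case: (x \in t); case: (ev t) => [|[|?]] /=; rewrite ?addn0 //.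

Lemma N_i er hp m : Ng er hp false m.+2 = Ng er (~~hp) false m.+1 + Ng er (~~hp) true m.+1.
Proof.
rewrite /Ng sumLS sumL0 ?add0n => [|x t _]; last by rewrite /= inE eqxx /= !andbF.
rewrite -big_split; apply: sumL_ext => x t hp' /=; rewrite (negbTE (path_notin hp')).
by case: (odd x); case: (x \in t); case: hp; case: (ev t == er).
Qed.
Lemma N_ii er m : Ng er true true m.+2 = Ng er true false m.+1 + Ng er true true m.+1.
Proof.
rewrite /Ng sumLS [X in _ + X]sumL0 ?addn0 => [|x t hp]; last by rewrite /= (negbTE (path_notin hp)) /= !andbF.
by rewrite -big_split; apply: sumL_ext => x t hp /=; rewrite mem_head ev_cons /=; case: (odd x) => //=; rewrite ?andbF ?addn0; case: (x \in t); case: (ev t == er).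
Qed.
Lemma N_iii m : Ng 0 false true m.+2 = Ng 0 false true m.+1.
Proof.
rewrite /Ng sumLS [X in _ + X]sumL0 ?addn0 => [|x t hp]; last by rewrite /= (negbTE (path_notin hp)) /= !andbF.
apply: sumL_ext => x t hp /=; rewrite mem_head; brute x t.
Qed.
Lemma N_iv m : Ng 1 false true m.+2 = Ng 1 false true m.+1 + Ng 0 false false m.+1.
Proof.
rewrite /Ng sumLS [X in _ + X]sumL0 ?addn0 => [|x t hp]; last by rewrite /= (negbTE (path_notin hp)) /= !andbF.
rewrite -big_split; apply: sumL_ext => x t hp /=; rewrite mem_head; brute x t.
Qed.

Definition g1l M := \sum_(s <- L M) nat_of_bool (ev s == 1).

Lemma g1l_N M : g1l M = Ng 1 true false M + Ng 1 true true M + Ng 1 false true M + Ng 0 false false M.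
Proof.
rewrite /g1l /Ng -!big_split; apply: sumL_ext => x t hp /=; brute x t.
Qed.

Lemma N_closed n :
  [/\ Ng 0 false false n.+2 = fib n.+1, Ng 0 true false n.+2 = fib n,
      Ng 0 true true n.+2 = fib n.+1, Ng 0 false true n.+2 = 0 &
    [/\ Ng 1 false false n.+2 + fib n.+2 = qq n.+1 + 1, Ng 1 false true n.+2 + 1 = fib n.+2,
      Ng 1 true false n.+2 = qq n & Ng 1 true true n.+2 + fib n.+2 = qq n.+1 + 1]].
Proof.
elim: n => [|n [h1 h2 h3 h4 [h5 h6 h7 h8]]].
  by rewrite /Ng /= !big_cons !big_nil /ev /= !big_cons !big_nil.
rewrite (N_i 0 true n.+1) (N_i 0 false n.+1) (N_i 1 true n.+1) (N_i 1 false n.+1).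
rewrite (N_ii 0 n.+1) (N_ii 1 n.+1) (N_iii n.+1) (N_iv n.+1).
change (~~ true) with false; change (~~ false) with true.
rewrite h1 h2 h3 h4.
have := fibS n.+1; have := qqS n; have := fibS n.
split; [lia|lia|lia|lia|split; lia].
Qed.

Lemma g1l_qq M : g1l M = qq M.
Proof.
case: M => [|[|n]]; first by rewrite /g1l /= big_nil.
  by rewrite /g1l /= big_seq1 /ev /= big_seq1.
rewrite g1l_N; case: (N_closed n) => h1 h2 h3 h4 [h5 h6 h7 h8].
have := fibS n; have := qqS n; lia.
Qed.

Definition rep (s : seq nat) := \sum_(v <- undup s) nat_of_bool (1 < count_mem v s).

Lemma rep_cons x t : rep (x :: t) = rep t + (count_mem x t == 1).
Proof.
rewrite /rep /=; case: ifP => h.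
- have hu : x \in undup t by rewrite mem_undup.
  rewrite (bigD1_seq x hu (undup_uniq t)) [in RHS](bigD1_seq x hu (undup_uniq t)) /= eqxx.
  have hc : 0 < count_mem x t by rewrite -has_count has_pred1.
  rewrite (@eq_bigr _ _ _ _ _ _ _ (fun v => nat_of_bool (1 < count_mem v t))); last first.
    by move=> v /negbTE hv; rewrite eq_sym hv.
  move: hc; case: (count_mem x t) => [|[|c]] //= _; lia.
- rewrite big_cons /= eqxx.
  have hc : count_mem x t = 0 by apply/eqP; rewrite -leqn0 leqNgt -has_count has_pred1 h.
  rewrite hc /= add0n addn0; apply: eq_big_seq => v; rewrite mem_undup => hv.
  by have -> : (x == v) = false by apply/eqP => e; rewrite e hv in h.
Qed.

Definition Rh r mm M := \sum_(s <- L M)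
  nat_of_bool ((rep (behead s) == r) && (minn (count_mem (head 0 s) (behead s)) 2 == mm)).

Lemma cnt_bump x t : path geq x t -> count_mem x.+1 t = 0.
Proof. by move=> /path_notin h; apply/eqP; rewrite -leqn0 leqNgt -has_count has_pred1. Qed.

Lemma R_i r m : Rh r 0 m.+2 = Rh r 0 m.+1 + Rh r 1 m.+1 + Rh r 2 m.+1.
Proof.
rewrite /Rh sumLS sumL0 ?add0n => [|x t _]; last by rewrite /= eqxx; case: (count_mem x t) => [|[|c]] //=; rewrite ?andbF.
rewrite -!big_split; apply: sumL_ext => x t hp /=; rewrite cnt_bump //.
by case: (count_mem x t) => [|[|c]] /=; case: (rep t == r).
Qed.
Lemma R_ii r m : Rh r 1 m.+2 = Rh r 0 m.+1.
Proof.
rewrite /Rh sumLS [X in _ + X]sumL0 ?addn0 => [|x t hp]; last by rewrite /= cnt_bump // andbF.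
apply: sumL_ext => x t hp /=; rewrite eqxx rep_cons.
by case: (count_mem x t) => [|[|c]] /=; rewrite ?addn0 ?andbF.
Qed.
Lemma R_iii m : Rh 0 2 m.+2 = Rh 0 2 m.+1.
Proof.
rewrite /Rh sumLS [X in _ + X]sumL0 ?addn0 => [|x t hp]; last by rewrite /= cnt_bump // andbF.
apply: sumL_ext => x t hp /=; rewrite eqxx rep_cons.
by case: (count_mem x t) => [|[|c]] /=; case: (rep t) => [|[|?]] /=; rewrite ?addn0 ?andbF.
Qed.
Lemma R_iv m : Rh 1 2 m.+2 = Rh 1 2 m.+1 + Rh 0 1 m.+1.
Proof.
rewrite /Rh sumLS [X in _ + X]sumL0 ?addn0 => [|x t hp]; last by rewrite /= cnt_bump // andbF.
rewrite -big_split; apply: sumL_ext => x t hp /=; rewrite eqxx rep_cons.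
by case: (count_mem x t) => [|[|c]] /=; case: (rep t) => [|[|?]] /=; rewrite ?addn0 ?andbF.
Qed.

Definition h1l M := \sum_(s <- L M) nat_of_bool (rep s == 1).

Lemma h1l_R M : h1l M = Rh 1 0 M + Rh 1 2 M + Rh 0 1 M.
Proof.
rewrite /h1l /Rh -!big_split; apply: sumL_ext => x t hp /=; rewrite rep_cons.
by case: (count_mem x t) => [|[|c]] /=; case: (rep t) => [|[|?]] /=; rewrite ?addn0 ?andbF.
Qed.

Lemma R_closed n :
  [/\ Rh 0 0 n.+2 = fib n.+2, Rh 0 1 n.+2 = fib n.+1, Rh 0 2 n.+2 = 0 &
    [/\ Rh 1 0 n.+2 + fib n.+3 = qq n.+2 + 1, Rh 1 1 n.+2 + fib n.+2 = qq n.+1 + 1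
      & Rh 1 2 n.+2 + 1 = fib n.+2]].
Proof.
elim: n => [|n [h1 h2 h3 [h4 h5 h6]]].
  by rewrite /Rh /= !big_cons !big_nil /rep /= !big_cons !big_nil.
rewrite (R_i 0 n.+1) (R_i 1 n.+1) (R_ii 0 n.+1) (R_ii 1 n.+1) (R_iii n.+1) (R_iv n.+1).
have := fibS n.+2; have := fibS n.+1; have := qqS n.+1; have := fibS n.
split; [lia|lia|lia|split; lia].
Qed.

Lemma h1l_qq M : h1l M = qq M.
Proof.
case: M => [|[|n]]; first by rewrite /h1l /= big_nil.
  by rewrite /h1l /= big_seq1 /rep /= big_seq1.
rewrite h1l_R; case: (R_closed n) => h1 h2 h3 [h4 h5 h6].
have := fibS n; have := fibS n.+1; have := qqS n; lia.
Qed.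

Section SeriesSec.
Import GRing.Theory.
Local Open Scope ring_scope.

Definition dc (j : nat) : int :=
  match j with 0 => 1 | 1 => -2 | 2 => -1 | 3 => 2 | 4 => 1 | _ => 0 end.

Lemma den_expand : den = 1 - 2%:R *: 'X - 'X^2 + 2%:R *: 'X^3 + 'X^4.
Proof. rewrite /den !scaler_nat. ring. Qed.

Lemma coef_den j : den`_j = dc j.
Proof.
rewrite den_expand !coefE.
case: j => [|[|[|[|[|j]]]]] //=.
Qed.

Lemma series_rec (a : nat -> nat) (P : {poly int}) :
  (forall M, (0 < M)%N -> (a M.+4 + 2 * a M.+1 + a M = 2 * a M.+3 + a M.+2)%N) ->
  P`_0 = 0 -> P`_1 = (a 1%N)%:R -> P`_2 = (a 2%N)%:R - 2%:R * (a 1%N)%:R ->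
  P`_3 = (a 3%N)%:R - 2%:R * (a 2%N)%:R - (a 1%N)%:R ->
  P`_4 = (a 4%N)%:R - 2%:R * (a 3%N)%:R - (a 2%N)%:R + 2%:R * (a 1%N)%:R ->
  (forall n, (4 < n)%N -> P`_n = 0) -> series_eq a P den.
Proof.
move=> hrec h0 h1 h2 h3 h4 h5 N; apply/polyP => i; rewrite !coef_take_poly; case: ifP => // hi.
rewrite coefM.
pose b := fun k => if k == 0%N then 0 else (a k)%:R : int.
have -> : \sum_(j < i.+1) den`_j * (trunc_series a N)`_(i - j) = \sum_(j < i.+1) dc j * b (i - j)%N.
  apply: eq_bigr => j _; rewrite coef_den /trunc_series coef_poly.
  have -> : (i - j < N.+1)%N by have := ltn_ord j; lia.
  by [].
rewrite -(big_mkord xpredT (fun j => dc j * b (i - j)%N)).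
case: i hi => [|[|[|[|[|k]]]]] hi.
- by rewrite big_nat1 h0 /b /= mulr0.
- by rewrite /index_iota /= !big_cons big_nil /b /= h1; ring.
- by rewrite /index_iota /= !big_cons big_nil /b /= h2; ring.
- by rewrite /index_iota /= !big_cons big_nil /b /= h3; ring.
- by rewrite /index_iota /= !big_cons big_nil /b /= h4; ring.
rewrite (big_cat_nat (n:=5)) //= [X in _ + X](_ : _ = 0) ?addr0; last first.
  rewrite big_nat_cond big1 // => j /andP[/andP[hj _] _].
  by case: j hj => [|[|[|[|[|j]]]]] // _; rewrite /= mul0r.
rewrite h5 // /index_iota /= !big_cons big_nil !subSS !subn0 /b /=.
have := congr1 (fun n : nat => n%:R : int) (hrec k.+1 isT); rewrite ?natrD ?natrM /= => e.
lra.
Qed.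

End SeriesSec.

Section Transfer.
Variable M : nat.
Implicit Types P Q : ptuple M.

Definition vs P : seq nat := [seq val (P i) | i <- enum 'I_M].
Definition tolist P : seq nat := [seq x <- vs P | 0 < x].

Lemma size_vs P : size (vs P) = M.
Proof. by rewrite size_map size_enum_ord. Qed.

Lemma nth_vs P i (hi : i < M) : nth 0 (vs P) i = P (Ordinal hi).
Proof.
rewrite (nth_map (Ordinal hi)) ?size_enum_ord //; congr (val (P _)).
by apply: val_inj; rewrite /= nth_enum_ord.
Qed.

Lemma big_enumI (R : Type) (op : SemiGroup.com_law R) (x : R) (F : 'I_M -> R) :
  \big[op/x]_(i <- enum 'I_M) F i = \big[op/x]_(i : 'I_M) F i.
Proof. by rewrite big_enum; apply: eq_bigl => i; rewrite inE. Qed.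

Lemma sum_enum (F : 'I_M -> nat) : \sum_(i <- enum 'I_M) F i = \sum_(i : 'I_M) F i.
Proof. exact: big_enumI. Qed.

Lemma card_sumb (T : finType) (p : pred T) : #|[set x | p x]| = \sum_(x : T) nat_of_bool (p x).
Proof. by rewrite -sum1_card big_mkcond /=; apply: eq_bigr => x _; rewrite inE; case: (p x). Qed.

Lemma sum_count (T : Type) (p : pred T) (s : seq T) : \sum_(x <- s) nat_of_bool (p x) = count p s.
Proof. by elim: s => [|x s IH]; rewrite ?big_nil ?big_cons ?IH. Qed.

Lemma nparts_tolist P : nparts P = size (tolist P).
Proof.
rewrite /nparts card_sumb -sum_enum size_filter -sum_count /vs big_map.
by apply: eq_bigr => i _; rewrite -lt0n.
Qed.

Lemma largest_tolist P : largest P = \max_(x <- tolist P) x.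
Proof.
rewrite /largest /tolist big_filter /vs big_map big_mkcond /= -big_enumI.
by rewrite [RHS]big_mkcond; apply: eq_bigr => i _; case: (P i) => [[|k] h].
Qed.

Lemma max_path x t : path geq x t -> \max_(y <- x :: t) y = x.
Proof.
move=> /path_all ht; rewrite big_cons; apply/maxn_idPl.
elim: t ht => [|y t IH] /=; first by rewrite big_nil.
by move=> /andP[hy ht]; rewrite big_cons geq_max hy IH.
Qed.

Lemma geq_trans : transitive geq.
Proof. by move=> a b c /= h1 h2; apply: leq_trans h2 h1. Qed.

Lemma all0_filter v : all (fun y => y <= 0) v -> [seq y <- v | 0 < y] = [::].
Proof. by elim: v => //= y v IH /andP[hy hv]; rewrite ltnNge hy /= IH. Qed.

Lemma all0_nth v i : all (fun y => y <= 0) v -> nth 0 v i = 0.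
Proof.
move=> /allP h; case: (ltnP i (size v)) => hi; last by rewrite nth_default.
by apply/eqP; rewrite -leqn0; apply: h; rewrite mem_nth.
Qed.

Lemma sorted_nth_filter v : sorted geq v -> forall i, nth 0 v i = nth 0 [seq x <- v | 0 < x] i.
Proof.
elim: v => [|x v IH] //= hs i.
have hv := path_sorted hs.
case: (posnP x) => [x0|xp].
  have hall := path_all hs; rewrite x0 in hall *.
  rewrite /= all0_filter // nth_nil; case: i => [|i] //=; exact: all0_nth.
case: i => [|i] //=; exact: IH.
Qed.

Lemma part_sorted P : is_partition P -> sorted geq (vs P).
Proof.
move=> /forallP hP; apply/(sortedP 0) => i; rewrite size_vs => hi.
have hi' : i < M by apply: ltnW.
rewrite (nth_vs P hi) (nth_vs P hi') /=.
by have := hP (Ordinal hi') => /forallP /(_ (Ordinal hi)) /implyP; apply; rewrite /= leqnSn.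
Qed.

Lemma tolist_sorted P : is_partition P -> sorted geq (tolist P).
Proof. by move=> /part_sorted h; apply: sorted_filter => //; exact: geq_trans. Qed.

Lemma perimM_valid P : is_partition P -> perimM P = validseq M (tolist P).
Proof.
move=> hP; have hs := tolist_sorted hP.
have hpos : all (fun y => 0 < y) (tolist P) by apply: filter_all.
rewrite /perimM hP /perimeter nparts_tolist largest_tolist /=.
case: (tolist P) hs hpos => [|x t] //= hs hpos.
rewrite max_path // hs hpos /=; congr (_ == _); lia.
Qed.

Lemma nth_tolist P : is_partition P -> forall i : 'I_M, val (P i) = nth 0 (tolist P) i.
Proof.
move=> hP [i hi]; rewrite /= -(nth_vs P hi); exact: sorted_nth_filter (part_sorted hP) i.
Qed.

Lemma tolist_inj P Q : perimM P -> perimM Q -> tolist P = tolist Q -> P = Q.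
Proof.
move=> /and3P[hP _ _] /and3P[hQ _ _] e; apply/ffunP => i; apply: val_inj.
by rewrite (nth_tolist hP) (nth_tolist hQ) e.
Qed.

Lemma tolist_surj s : validseq M s -> exists P, perimM P /\ tolist P = s.
Proof.
case: s => [|x t] //= /and3P[hp hpos /eqP e].
have hall : all (fun y => y <= x) (x :: t) by rewrite /= leqnn; exact: path_all.
have hbound : forall i, nth 0 (x :: t) i <= x.
  move=> i; case: (ltnP i (size (x :: t))) => hi; last by rewrite nth_default.
  by apply: (allP hall); rewrite mem_nth.
pose P : ptuple M := [ffun i : 'I_M => inord (nth 0 (x :: t) i)].
have hPi : forall i : 'I_M, val (P i) = nth 0 (x :: t) i.
  by move=> i; rewrite ffunE /= inordK // ltnS; apply: leq_trans (hbound i) _; lia.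
have hvs : vs P = (x :: t) ++ nseq (M - size (x :: t)) 0.
  apply: (@eq_from_nth _ 0); first by rewrite size_vs size_cat size_nseq /=; lia.
  move=> i; rewrite size_vs => hi; rewrite (nth_vs P hi) hPi nth_cat.
  case: ifP => // /negbT; rewrite -leqNgt => hle; rewrite nth_nseq nth_default //; by case: ifP.
have htl : tolist P = x :: t.
  rewrite /tolist hvs filter_cat (all_filterP (hpos : all (fun y => 0 < y) (x :: t))) filter_nseq /= cats0 //.
have hpart : is_partition P.
  apply/forallP => i; apply/forallP => j; apply/implyP => hij; rewrite !hPi.
  have st : sorted geq (x :: t) by [].
  case: (ltnP j (size (x :: t))) => hj; last by rewrite (nth_default _ hj).
  have hi : i < size (x :: t) by apply: leq_ltn_trans hij hj.
  by have := sorted_leq_nth geq_trans (fun a => leqnn a) 0 st; move=> /(_ i j); apply; rewrite ?inE.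
exists P; split => //; rewrite perimM_valid // htl /= hp hpos; apply/eqP; exact: e.
Qed.

Lemma transfer (F : seq nat -> nat) :
  \sum_(P : ptuple M | perimM P) F (tolist P) = \sum_(s <- L M) F s.
Proof.
rewrite -[LHS]big_filter.
rewrite (_ : \sum_(P <- [seq P <- index_enum (ptuple M) | perimM P]) F (tolist P) =
   \sum_(s <- map tolist [seq P <- index_enum (ptuple M) | perimM P]) F s); last by rewrite big_map.
apply: perm_big; apply: uniq_perm.
- rewrite map_inj_in_uniq ?filter_uniq ?index_enum_uniq // => P Q.
  rewrite !mem_filter => /andP[hP _] /andP[hQ _]; exact: tolist_inj.
- exact: uniqL.
- move=> s; rewrite memL; apply/mapP/idP => [[P] | hs].
  + rewrite mem_filter => /andP[hP _] ->; rewrite -perimM_valid //; by case/and3P: hP.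
  + have [P [hP <-]] := tolist_surj hs; exists P => //; by rewrite mem_filter hP mem_index_enum.
Qed.

Lemma neq0 (v : 'I_M.+1) : (v != ord0) = (0 < v).
Proof. by case: v => [[|k] h]. Qed.

Lemma odd_tolist P : odd_parts P = all odd (tolist P).
Proof.
rewrite /odd_parts /tolist all_filter /vs all_map.
apply/forallP/allP => [h i _ | h i]; [move: (h i) | move: (h i (mem_enum _ i))]; by rewrite /= neq0.
Qed.

Lemma uniq_map_in (T1 T2 : eqType) (f : T1 -> T2) (s : seq T1) :
  uniq (map f s) -> {in s &, injective f}.
Proof.
elim: s => [|a s IH] //= /andP[ha hu] x y; rewrite !inE.
case/orP => [/eqP -> | hx]; case/orP => [/eqP -> | hy] // e.
- by move: ha; rewrite e map_f.
- by move: ha; rewrite -e map_f.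
- exact: IH.
Qed.

Lemma distinct_tolist P : distinct_parts P = uniq (tolist P).
Proof.
have -> : tolist P = map (fun i => val (P i)) [seq i <- enum 'I_M | 0 < P i].
  by rewrite /tolist /vs filter_map.
apply/idP/idP => h.
- rewrite map_inj_in_uniq; first by apply: filter_uniq; apply: enum_uniq.
  move=> i j.
  rewrite !mem_filter => /andP[hi _] /andP[hj _] e; apply/eqP/negPn/negP => nij.
  move/forallP: h => /(_ i) /forallP /(_ j) /implyP; rewrite neq0 hi nij => /(_ isT).
  by rewrite -val_eqE e eqxx.
- have hinj := uniq_map_in h.
  apply/forallP => i; apply/forallP => j; apply/implyP => /andP[hi nij].
  apply/negP => /eqP e; move/negP: nij; apply; apply/eqP; apply: hinj; last by rewrite e.
  + by rewrite mem_filter mem_enum -neq0 hi.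
  + by rewrite mem_filter mem_enum -neq0 -e hi.
Qed.

Lemma LV (l : seq nat) (f : nat -> bool) : all (fun x => x < M.+1) l ->
  \sum_(v : 'I_M.+1) nat_of_bool ((val v \in l) && f v) = \sum_(v <- undup l) nat_of_bool (f v).
Proof.
move=> hl.
rewrite -(big_mkord xpredT (fun v => nat_of_bool ((v \in l) && f v))).
rewrite [LHS](eq_bigr (fun i => if i \in l then nat_of_bool (f i) else 0)); last first.
  by move=> i _; case: (i \in l).
rewrite -big_mkcond -big_filter; apply: perm_big; apply: uniq_perm.
- by apply: filter_uniq; apply: iota_uniq.
- exact: undup_uniq.
- move=> v; rewrite mem_filter mem_iota mem_undup; case hv: (v \in l) => //=.
  by have := allP hl v hv; lia.
Qed.

Lemma tolist_bound P : all (fun x => x < M.+1) (tolist P).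
Proof. by apply/allP => x; rewrite mem_filter => /andP[_ /mapP[i _ ->]]; exact: ltn_ord. Qed.

Lemma mem_vs P (v : 'I_M.+1) : (val v \in vs P) = [exists i, P i == v].
Proof.
apply/mapP/existsP => [[i _ e] | [i /eqP <-]]; last by exists i; rewrite ?mem_enum.
by exists i; apply/eqP/val_inj.
Qed.

Lemma even_tolist P : #|even_values P| = ev (tolist P).
Proof.
rewrite /even_values card_sumb /ev -LV ?tolist_bound //; apply: eq_bigr => v _.
by rewrite mem_filter mem_vs neq0; case: (0 < v); case: (odd v); case: [exists _, _].
Qed.

Lemma mult_vs P (v : 'I_M.+1) : mult P v = count_mem (val v) (vs P).
Proof.
rewrite /mult card_sumb -sum_enum /vs count_map -sum_count; apply: eq_bigr => i _.
by rewrite /= val_eqE.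
Qed.

Lemma rep_tolist P : #|repeated_values P| = rep (tolist P).
Proof.
rewrite /repeated_values card_sumb /rep -LV ?tolist_bound //; apply: eq_bigr => -[[|k] hk] _.
  by rewrite neq0 mem_filter.
rewrite mult_vs neq0 mem_filter /=.
have hc : count_mem k.+1 (tolist P) = count_mem k.+1 (vs P).
  by rewrite /tolist count_filter; apply: eq_count => x /=; case: (eqVneq x k.+1) => // ->.
rewrite hc; case h2: (1 < _); rewrite ?andbF ?andbT //.
apply/esym; rewrite -has_pred1 has_count.
by move: h2; case: (count_mem _ _) => [|[|n]].
Qed.
End Transfer.


Lemma g_So M : g M = So M.
Proof.
rewrite /g big_mkcondr /=.
transitivity (\sum_(P : ptuple M | perimM P) (all odd (tolist P)) * size (tolist P));
  last exact: (transfer M (fun s => (all odd s) * size s)).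
by apply: eq_bigr => P _; rewrite odd_tolist nparts_tolist; case: (all odd _); rewrite ?mul1n.
Qed.
Lemma h_H1 M : h M = H1 M.
Proof.
rewrite /h big_mkcondr /=.
transitivity (\sum_(P : ptuple M | perimM P) (uniq (tolist P)) * size (tolist P));
  last exact: (transfer M (fun s => (uniq s) * size s)).
by apply: eq_bigr => P _; rewrite distinct_tolist nparts_tolist; case: (uniq _); rewrite ?mul1n.
Qed.
Lemma g1_qq M : g1 M = qq M.
Proof.
rewrite -g1l_qq /g1 (@card_sumb _ (fun P : ptuple M => perimM P && G1_prop P)).
transitivity (\sum_(P : ptuple M | perimM P) nat_of_bool (G1_prop P)).
  by rewrite [RHS]big_mkcond; apply: eq_bigr => P _; case: (perimM P).
transitivity (\sum_(P : ptuple M | perimM P) nat_of_bool (ev (tolist P) == 1));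
  last exact: (transfer M (fun s => nat_of_bool (ev s == 1))).
by apply: eq_bigr => P _; rewrite /G1_prop even_tolist.
Qed.
Lemma h1_qq M : h1 M = qq M.
Proof.
rewrite -h1l_qq /h1 (@card_sumb _ (fun P : ptuple M => perimM P && H1_prop P)).
transitivity (\sum_(P : ptuple M | perimM P) nat_of_bool (H1_prop P)).
  by rewrite [RHS]big_mkcond; apply: eq_bigr => P _; case: (perimM P).
transitivity (\sum_(P : ptuple M | perimM P) nat_of_bool (rep (tolist P) == 1));
  last exact: (transfer M (fun s => nat_of_bool (rep s == 1))).
by apply: eq_bigr => P _; rewrite /H1_prop rep_tolist.
Qed.



Import GRing.Theory.
Local Open Scope ring_scope.

Theorem mainTheorem3 :
  [/\ series_eq g ('X - 'X^3) den,
      series_eq h ('X - 'X^2) den,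
      series_eq g1 ('X^2) den,
      series_eq h1 ('X^2) den
    & forall M : nat, (1 <= M)%N -> g1 M = h1 M].
Proof.
have qrec : forall M, (0 < M)%N -> (qq M.+4 + 2 * qq M.+1 + qq M = 2 * qq M.+3 + qq M.+2)%N.
  move=> M _; have := qqS M; have := qqS M.+1; have := qqS M.+2; have := fibS M.+1; lia.
have q1 : qq 1 = 0%N by []. have q2 : qq 2 = 1%N by []. have q3 : qq 3 = 2%N by [].
have q4 : qq 4 = 5%N by [].
have S1 : So 1 = 1%N by rewrite /So /= big_seq1.
have S2 : So 2 = 2%N by rewrite /So /= !big_cons big_nil.
have S3 : So 3 = 4%N by rewrite (So_rec (isT : 0 < 1)%N) S1 S2.
have S4 : So 4 = 8%N by rewrite (So_rec (isT : 0 < 2)%N) S3 S2.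
have T1 : H1 1 = 1%N by rewrite /H1 /= big_seq1.
have T2 : H1 2 = 1%N by rewrite /H1 /= !big_cons big_nil.
have T3 : H1 3 = 3%N by rewrite (H1_rec (isT : 0 < 1)%N) T1 T2.
have T4 : H1 4 = 5%N by rewrite (H1_rec (isT : 0 < 2)%N) T3 T2.
split.
- apply: series_rec; rewrite ?g_So ?S1 ?S2 ?S3 ?S4.
  + move=> M hM; rewrite !g_So; have := So_rec hM; have := So_rec (isT : 0 < M.+1)%N.
    have := So_rec (isT : 0 < M.+2)%N; have := fibS M.+1; lia.
  all: try by rewrite !coefE.
  move=> n hn; rewrite !coefE; case: n hn => [|[|[|[|[|n]]]]] //.
- apply: series_rec; rewrite ?h_H1 ?T1 ?T2 ?T3 ?T4.
  + move=> M hM; rewrite !h_H1; have := H1_rec hM; have := H1_rec (isT : 0 < M.+1)%N.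
    have := H1_rec (isT : 0 < M.+2)%N; have := fibS M; lia.
  all: try by rewrite !coefE.
  move=> n hn; rewrite !coefE; case: n hn => [|[|[|[|[|n]]]]] //.
- apply: series_rec; rewrite ?g1_qq ?q1 ?q2 ?q3 ?q4 //.
  + by move=> M hM; rewrite !g1_qq; apply: qrec.
  all: try by rewrite !coefE.
  move=> n hn; rewrite !coefE; case: n hn => [|[|[|[|[|n]]]]] //.
- apply: series_rec; rewrite ?h1_qq ?q1 ?q2 ?q3 ?q4 //.
  + by move=> M hM; rewrite !h1_qq; apply: qrec.
  all: try by rewrite !coefE.
  move=> n hn; rewrite !coefE; case: n hn => [|[|[|[|[|n]]]]] //.
- by move=> M _; rewrite g1_qq h1_qq.
Qed.
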